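(* Fix a constant $p>0$. Let $q(k,m)$ be any function with $q(k,m)/(km)\to 0$ as $k,m\to\infty$ simultaneously. Then there is no randomized algorithm that, for every instance $M$ of the Anomalous Row Problem of size $k\times m$, probes at most $q(k,m)$ cells of $M$ and outputs the index of the anomalous row with probability at least $p$.
   Context: Anomalous Row Problem: the input is a matrix $M\in\mathbb{F}_2^{k\times m}$ (with $m\ge k+1$) such that every row except one contains exactly $k+1$ zero entries, and the remaining row (the anomalous row) contains exactly $k$ zero entries; the task is to find the anomalous row. The algorithm accesses $M$ only by probing individual cells (each probe reveals one entry). A randomized algorithm may use internal random coins; the success probability is over these coins and must hold for every valid input. *)

(* Defs.v *)
From HB Require Import structures.
From mathcomp Require Import all_boot all_order ssralg ssrnum matrix.
From mathcomp Require Import reals.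
Set Implicit Arguments. Unset Strict Implicit. Unset Printing Implicit Defensive.
Import Order.TTheory GRing.Theory Num.Theory.
Local Open Scope ring_scope.

(* Matrices over F_2, entries represented as booleans (false = 0, true = 1). *)
Definition zeros_in_row (k m : nat) (M : 'M[bool]_(k, m)) (i : 'I_k) : nat :=
  #|[set j : 'I_m | M i j == false]|.

Definition anomalous_row (k m : nat) (M : 'M[bool]_(k, m)) (i : 'I_k) : bool :=
  (zeros_in_row M i == k) &&
  [forall j : 'I_k, (j != i) ==> (zeros_in_row M j == k.+1)].

Definition ARP_instance (k m : nat) (M : 'M[bool]_(k, m)) : Prop :=
  (k.+1 <= m)%N /\ exists i, anomalous_row M i.

(* Deterministic adaptive probing algorithms = decision trees: an inner node
   probes cell (r, c) and branches on the revealed bit; a leaf outputs a row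
   index (or None = no answer). *)
Inductive dtree (k m : nat) : Type :=
| Leaf of option 'I_k
| Probe of 'I_k & 'I_m & dtree k m & dtree k m.  (* (r, c, if 0, if 1) *)

Fixpoint dt_output (k m : nat) (t : dtree k m) (M : 'M[bool]_(k, m)) : option 'I_k :=
  match t with
  | Leaf o => o
  | Probe r c t0 t1 => if M r c then dt_output t1 M else dt_output t0 M
  end.

Fixpoint dt_probes (k m : nat) (t : dtree k m) (M : 'M[bool]_(k, m)) : nat :=
  match t with
  | Leaf _ => 0
  | Probe r c t0 t1 => (if M r c then dt_probes t1 M else dt_probes t0 M).+1
  end.

(* A randomized algorithm: a (finitely supported) probability distribution
   over deterministic decision trees (the tree selected by the internal
   coins): outcome o : 'I_n has probability weight o and runs tree o. *)
Record rand_alg (R : realType) (k m : nat) := RandAlg {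
  ra_n : nat;
  ra_weight : 'I_ra_n -> R;
  ra_tree : 'I_ra_n -> dtree k m }.

Definition is_distribution (R : realType) (k m : nat) (A : rand_alg R k m) : Prop :=
  (forall o : 'I_(ra_n A), 0 <= @ra_weight R k m A o) /\ \sum_(o < ra_n A) @ra_weight R k m A o = 1.

Definition success_prob (R : realType) (k m : nat) (A : rand_alg R k m)
    (M : 'M[bool]_(k, m)) : R :=
  \sum_(o < ra_n A) @ra_weight R k m A o *
     (if dt_output (@ra_tree R k m A o) M is Some i then
        (if anomalous_row M i then 1 else 0) else 0).

Definition probes_at_most (R : realType) (k m : nat) (A : rand_alg R k m)
    (M : 'M[bool]_(k, m)) (Q : R) : Prop :=
  forall o : 'I_(ra_n A), 0 < @ra_weight R k m A o -> (dt_probes (@ra_tree R k m A o) M)%:R <= Q.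

(* Main.v *)
Require Import Defs.
From HB Require Import structures.
From mathcomp Require Import all_boot all_order ssralg ssrnum matrix.
From mathcomp Require Import reals.
Import Order.TTheory GRing.Theory Num.Theory.
Local Open Scope ring_scope.
Set Implicit Arguments. Unset Strict Implicit.

Definition Mc (k m : nat) (c : 'I_k * 'I_m) : 'M[bool]_(k, m) :=
  \matrix_(r, s) ((r, s) == c).
Definition M0 (k m : nat) : 'M[bool]_(k, m) := \matrix_(r, s) false.

Fixpoint pc (k m : nat) (t : dtree k m) : seq ('I_k * 'I_m) :=
  match t with Leaf _ => [::] | Probe r s t0 _ => (r, s) :: pc t0 end.

Lemma tree_key (k m : nat) (t : dtree k m) (n : nat) (c : 'I_k * 'I_m) :
  c \in take n (pc t) \/ (n < dt_probes t (Mc c))%N \/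
  dt_output t (Mc c) = dt_output t (M0 k m).
Proof.
elim: t n => [o|r s t0 IH0 t1 IH1] n; first by right; right.
case: n => [|n]; first by right; left.
rewrite /= !mxE.
case: ifP => E; first by left; rewrite inE (eqP E) eqxx.
case: (IH0 n) => [H|[H|H]]; [left; rewrite inE H orbT | right; left | right; right] => //.
Qed.

Lemma zeros_Mc (k m : nat) (c : 'I_k * 'I_m) (i : 'I_k) :
  zeros_in_row (Mc c) i = if i == c.1 then m.-1 else m.
Proof.
rewrite /zeros_in_row; case: c => [a b] /=.
have [->|ne] := eqVneq i a.
  transitivity #|[set~ b]|; last by rewrite cardsC1 card_ord.
  apply: eq_card => j.
  rewrite !inE mxE -pair_eqE /= eqxx /= eqbF_neg.
  done.
transitivity #|[set: 'I_m]|; last by rewrite cardsT card_ord.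
apply: eq_card => j.
rewrite !inE mxE -pair_eqE /= (negbTE ne).
done.
Qed.

Lemma anom_Mc (k : nat) (c : 'I_k * 'I_k.+1) (i : 'I_k) :
  anomalous_row (Mc c) i = (i == c.1).
Proof.
rewrite /anomalous_row zeros_Mc /=.
have [->|ne] := eqVneq i c.1.
  rewrite eqxx /=. apply/forallP => j; apply/implyP => /negbTE.
  by rewrite zeros_Mc => ->.
by rewrite eqn_leq ltnn.
Qed.

Lemma inst_Mc (k : nat) (c : 'I_k * 'I_k.+1) : ARP_instance (Mc c).
Proof. split=> //; exists c.1; by rewrite anom_Mc. Qed.

Local Close Scope ring_scope.
Lemma count_tree (k : nat) (t : dtree k k.+1) (n : nat) :
  (forall c, (dt_probes t (Mc c) <= n)%N) ->
  (\sum_(c : 'I_k * 'I_k.+1) (dt_output t (Mc c) == Some c.1) <= n + k.+1)%N.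
Proof.
move=> Hn.
pose o0 := dt_output t (M0 k k.+1).
have H1 : forall c, ((dt_output t (Mc c) == Some c.1) <=
     (c \in take n (pc t)) + (o0 == Some c.1))%N.
  move=> c; case: (tree_key t n c) => [->|[H|->]]; first by case: (_ == _).
    by move: (Hn c); rewrite leqNgt H.
  by rewrite leq_addl.
apply: leq_trans; first by apply: leq_sum => c _; exact: H1.
rewrite big_split /=; apply: leq_add.
  have -> : \sum_c (c \in take n (pc t) : nat) = #|take n (pc t)|.
    rewrite -sum1_card [RHS]big_mkcond /=; apply: eq_bigr => i _; by case: (i \in _).
  apply: leq_trans (card_size _) _; by rewrite size_take_min geq_minl.
rewrite -(pair_bigA _ (fun a b => (o0 == Some a) : nat)) /=.
have E : forall a : 'I_k, \sum_(b < k.+1) ((o0 == Some a) : nat) = k.+1 * (o0 == Some a).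
  by move=> a; rewrite sum_nat_const card_ord.
rewrite (eq_bigr _ (fun a _ => E a)) -big_distrr /=.
rewrite -[X in (_ <= X)%N]muln1 leq_mul2l; apply/orP; right.
clear H1 E; case: o0 => [i|]; last by rewrite big1.
rewrite (bigD1 i) //= eqxx big1 // => j ne.
by case: eqP => // -[E]; rewrite E eqxx in ne.
Qed.
From mathcomp Require Import archimedean ring lra.
Local Open Scope ring_scope.

Lemma succ_term (R : realType) (k : nat) (t : dtree k k.+1) (c : 'I_k * 'I_k.+1) :
  (if dt_output t (Mc c) is Some i then
     (if anomalous_row (Mc c) i then 1 else 0) else 0 : R)
  = ((dt_output t (Mc c) == Some c.1) : nat)%:R.
Proof.
case: (dt_output t (Mc c)) => [i|] //=; rewrite anom_Mc.
have -> : (Some i == Some c.1) = (i == c.1) by apply/eqP/eqP => [[]|->]. by case: ifP.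
Qed.

Theorem theorem3 (R : realType) (p : R) (q : nat -> nat -> R) :
  0 < p ->
  (forall eps : R, 0 < eps -> exists N : nat, forall k m : nat,
       (N <= k)%N -> (N <= m)%N -> `|q k m / (k * m)%:R| <= eps) ->
  ~ exists A : forall k m : nat, rand_alg R k m,
      forall k m : nat,
        is_distribution (A k m) /\
        forall M : 'M[bool]_(k, m), ARP_instance M ->
          probes_at_most (A k m) M (q k m) /\ p <= success_prob (A k m) M.
Proof.
move=> p0 Hq [A HA].
have e0 : 0 < p / 3 by rewrite divr_gt0.
have [N HN] := Hq _ e0.
have hb : 3 / p < (Num.Def.archi_bound (3 / p))%:R.
  by apply: Num.Theory.archi_boundP; rewrite ltW // divr_gt0.
set B := Num.Def.archi_bound (3 / p) in hb.
set k := (maxn N B).+1.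
have hNk : (N <= k)%N by rewrite /k ltnW // ltnS leq_maxl.
have hBk : (B <= k)%N by rewrite /k ltnW // ltnS leq_maxr.
have hq := HN k k.+1 hNk (leq_trans hNk (leqnSn _)).
have [[w0 wsum] Hinst] := HA k k.+1.
set AA := A k k.+1.
set S := \sum_(c : 'I_k * 'I_k.+1) success_prob AA (Mc c).
have Slow : p *+ (k * k.+1) <= S.
  have -> : (k * k.+1)%N = #|{: 'I_k * 'I_k.+1}| by rewrite card_prod !card_ord.
  rewrite -sumr_const.
  by apply: ler_sum => c _; have [_ ->] := Hinst _ (inst_Mc c).
have Sup : S <= q k k.+1 + k.+1%:R.
  rewrite /S /success_prob exchange_big /=.
  apply: le_trans (_ : \sum_(o < ra_n AA) ra_weight o * (q k k.+1 + k.+1%:R) <= _).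
    apply: ler_sum => o _; rewrite -mulr_sumr.
    have [wp|] := ltP 0 (ra_weight o); last first.
      by move=> wle; have := w0 o; move: wle; rewrite le_eqVlt => /orP [/eqP ->|/lt_le_trans h /h]; rewrite ?mul0r // ltxx.
    rewrite ler_pM2l //.
    under eq_bigr do rewrite succ_term.
    rewrite -natr_sum.
    set n := \max_(c : 'I_k * 'I_k.+1) dt_probes (ra_tree o) (Mc c).
    have hn : forall c, (dt_probes (ra_tree o) (Mc c) <= n)%N by move=> c; apply: leq_bigmax.
    apply: le_trans (_ : (n + k.+1)%:R <= _); first by rewrite ler_nat count_tree.
    rewrite natrD lerD2r.
    have [c0 ->] : {c0 | n = dt_probes (ra_tree o) (Mc c0)}.
      have Hcard : (0 < #|{: 'I_k * 'I_k.+1}|)%N by rewrite card_prod !card_ord.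
      have [c0 Hc0] := bigop.eq_bigmax (fun c => dt_probes (ra_tree o) (Mc c)) Hcard.
      by exists c0.
    by have [/(_ o wp) H _] := Hinst _ (inst_Mc c0).
  by rewrite -mulr_suml wsum mul1r.
have hq' : q k k.+1 <= p / 3 * (k * k.+1)%:R.
  rewrite -ler_pdivrMr ?ltr0n ?muln_gt0 //.
  exact: le_trans (ler_norm _) hq.
have hx : 3 < k%:R * p.
  rewrite -ltr_pdivrMr //; apply: lt_le_trans hb _; by rewrite ler_nat.
move: Slow Sup hq' hx; rewrite -mulr_natr !natrM -addn1 natrD.
set x : R := k%:R => H1 H2 H3 H4.
have xpos : 0 < x by rewrite ltr0n.
nra.
Qed.
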